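(* Let $U$ be a finite set of men and $W_1\subseteq W_2$ finite sets of women with $|W_1|\le|W_2|=|U|$, each man having a strict total order over $W_2$ and each woman a strict total order over $U$. Let $M_1'$ be a stable matching of $(U,W_1)$ and $M_2$ a stable matching of $(U,W_2)$. Define $M_2'$ as the union of: the pairs of $M_1'\cap M_2$; for each path component of $G(M_1',M_2)$, its edges belonging to $M_2$; for each cycle of $G(M_1',M_2)$ of Type I, its edges belonging to $M_2$; for each cycle of $G(M_1',M_2)$ of Type II, its edges belonging to $M_1'$. Then $M_2'$ is a perfect matching between $U$ and $W_2$ and it is stable for the instance $(U,W_2)$.
   Context: A matching is a set of man–woman pairs with each person in at most one pair; a blocking pair of $M$ is a pair $(u,w)\notin M$ with ($u$ unmatched or preferring $w$ to his partner) and ($w$ unmatched or preferring $u$ to her partner); a matching is stable if it has no blocking pair. Preferences in a sub-instance are restrictions of the given ones. The difference graph $G(M,M')$ has vertex set $U\cup W_2$ and edge set $M\triangle M'$. A cycle $C$ of $G(M_1',M_2)$ is of Type I if every man in $C$ strictly prefers his partner in $M_2$ to his partner in $M_1'$ and every woman in $C$ strictly prefers her partner in $M_1'$ to her partner in $M_2$; it is of Type II if every man in $C$ strictly prefers his partner in $M_1'$ to his partner in $M_2$ and every woman in $C$ strictly prefers her partner in $M_2$ to her partner in $M_1'$ (every cycle is of one of these types). *)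

(* Defs.v *)
From mathcomp Require Import all_boot all_order.
Set Implicit Arguments. Unset Strict Implicit. Unset Printing Implicit Defensive.

(* Men are the elements of a finType U, women the elements of a finType W
   (W plays the role of W_2); W_1 is a subset of W. *)

Definition strict_total_order (T : eqType) (r : rel T) : Prop :=
  irreflexive r /\ transitive r /\ (forall x y, x != y -> r x y || r y x).

Section SM.
Variables (U W : finType).
(* pU u w w' : man u strictly prefers w to w';
   pW w u u' : woman w strictly prefers u to u'. *)
Variables (pU : U -> rel W) (pW : W -> rel U).

Definition is_matching (M : {set U * W}) : Prop :=
  forall p q, p \in M -> q \in M -> (p.1 = q.1 \/ p.2 = q.2) -> p = q.

Definition matching_of (W' : {set W}) (M : {set U * W}) : Prop :=
  is_matching M /\ (forall p, p \in M -> p.2 \in W').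

Definition blocking (M : {set U * W}) (u : U) (w : W) : Prop :=
  (u, w) \notin M /\
  (forall w', (u, w') \in M -> pU u w w') /\
  (forall u', (u', w) \in M -> pW w u u').

Definition stable_in (W' : {set W}) (M : {set U * W}) : Prop :=
  matching_of W' M /\ (forall u w, w \in W' -> ~ blocking M u w).

Definition perfect_matching (M : {set U * W}) : Prop :=
  is_matching M /\ (forall u, exists w, (u, w) \in M)
                /\ (forall w, exists u, (u, w) \in M).

Definition dadj (M M' : {set U * W}) : rel (U + W) :=
  fun x y => match x, y with
  | inl u, inr w => (u, w) \in (M :|: M') :\: (M :&: M')
  | inr w, inl u => (u, w) \in (M :|: M') :\: (M :&: M')
  | _, _ => false
  end.

Definition ddeg (M M' : {set U * W}) (x : U + W) : nat := #|dadj M M' x|.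

(* the connected component of v in G(M,M') is a cycle
   (G has maximum degree 2, so this means every vertex of it has degree 2) *)
Definition comp_cycle (M M' : {set U * W}) (v : U + W) : bool :=
  [forall x, connect (dadj M M') v x ==> (ddeg M M' x == 2)].

Definition typeI (M1 M2 : {set U * W}) (v : U + W) : bool :=
  [forall u, connect (dadj M1 M2) v (inl u) ==>
     [forall w1, [forall w2, ((u, w1) \in M1) && ((u, w2) \in M2) ==> pU u w2 w1]]]
  && [forall w, connect (dadj M1 M2) v (inr w) ==>
     [forall u1, [forall u2, ((u1, w) \in M1) && ((u2, w) \in M2) ==> pW w u1 u2]]].

Definition typeII (M1 M2 : {set U * W}) (v : U + W) : bool :=
  [forall u, connect (dadj M1 M2) v (inl u) ==>
     [forall w1, [forall w2, ((u, w1) \in M1) && ((u, w2) \in M2) ==> pU u w1 w2]]]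
  && [forall w, connect (dadj M1 M2) v (inr w) ==>
     [forall u1, [forall u2, ((u1, w) \in M1) && ((u2, w) \in M2) ==> pW w u2 u1]]].

(* M2' built from M1' (here M1) and M2; the component of an edge (u,w) of
   G(M1,M2) is the component of the vertex inl u. *)
Definition M2prime (M1 M2 : {set U * W}) : {set U * W} :=
  [set p | (p \in M1 :&: M2)
        || ((p \in M2 :\: M1) &&
              (~~ comp_cycle M1 M2 (inl p.1) || typeI M1 M2 (inl p.1)))
        || ((p \in M1 :\: M2) &&
              comp_cycle M1 M2 (inl p.1) && typeII M1 M2 (inl p.1))].

End SM.

(* Main.v *)
Require Import Defs.
From mathcomp Require Import all_boot all_order.
From Stdlib Require Import Classical FunctionalExtensionality.
Set Implicit Arguments. Unset Strict Implicit. Unset Printing Implicit Defensive.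

Section Proof.
Variables (U W : finType) (W1 : {set W}) (pU : U -> rel W) (pW : W -> rel U).
Hypothesis hpU : forall u, strict_total_order (pU u).
Hypothesis hpW : forall w, strict_total_order (pW w).
Hypothesis hcard : #|W| = #|U|.
Variables M1 M2 : {set U * W}.
Hypothesis hM1 : stable_in pU pW W1 M1.
Hypothesis hM2 : stable_in pU pW [set: W] M2.

Lemma irrU u w : pU u w w = false.
Proof. by case: (hpU u) => h _; apply: h. Qed.
Lemma irrW w u : pW w u u = false.
Proof. by case: (hpW w) => h _; apply: h. Qed.
Lemma transU u a b c : pU u a b -> pU u b c -> pU u a c.
Proof. by case: (hpU u) => _ [h _] ab bc; apply: h ab bc. Qed.
Lemma transW w a b c : pW w a b -> pW w b c -> pW w a c.
Proof. by case: (hpW w) => _ [h _] ab bc; apply: h ab bc. Qed.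
Lemma totU u a b : a != b -> ~~ pU u a b -> pU u b a.
Proof. by case: (hpU u) => _ [_ h] /h; case: (pU u a b). Qed.
Lemma totW w a b : a != b -> ~~ pW w a b -> pW w b a.
Proof. by case: (hpW w) => _ [_ h] /h; case: (pW w a b). Qed.
Lemma asymU u a b : pU u a b -> pU u b a -> False.
Proof. by move=> h1 h2; have := transU h1 h2; rewrite irrU. Qed.
Lemma asymW w a b : pW w a b -> pW w b a -> False.
Proof. by move=> h1 h2; have := transW h1 h2; rewrite irrW. Qed.

Lemma matU (M : {set U * W}) : is_matching M -> forall u w w',
  (u, w) \in M -> (u, w') \in M -> w = w'.
Proof. by move=> hM u w w' h1 h2; have := hM _ _ h1 h2 (or_introl erefl); case. Qed.
Lemma matW (M : {set U * W}) : is_matching M -> forall u u' w,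
  (u, w) \in M -> (u', w) \in M -> u = u'.
Proof. by move=> hM u u' w h1 h2; have := hM _ _ h1 h2 (or_intror erefl); case. Qed.

Lemma M1mat : is_matching M1. Proof. by case: hM1 => [[]]. Qed.
Lemma M2mat : is_matching M2. Proof. by case: hM2 => [[]]. Qed.
Lemma m1U u w w' : (u, w) \in M1 -> (u, w') \in M1 -> w = w'.
Proof. exact: (matU M1mat). Qed.
Lemma m1W u u' w : (u, w) \in M1 -> (u', w) \in M1 -> u = u'.
Proof. exact: (matW M1mat). Qed.
Lemma m2U u w w' : (u, w) \in M2 -> (u, w') \in M2 -> w = w'.
Proof. exact: (matU M2mat). Qed.
Lemma m2W u u' w : (u, w) \in M2 -> (u', w) \in M2 -> u = u'.
Proof. exact: (matW M2mat). Qed.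
Lemma m1W1 u w : (u, w) \in M1 -> w \in W1.
Proof. by move=> h; case: hM1 => [[_ h1] _]; exact: (h1 (u, w) h). Qed.

Lemma nbW (W' : {set W}) (M : {set U * W}) : stable_in pU pW W' M ->
  forall u w, w \in W' -> (u, w) \notin M -> (forall w', (u, w') \in M -> pU u w w') ->
  exists u', (u', w) \in M /\ ~~ pW w u u'.
Proof.
move=> [_ hs] u w hw hn hu.
case: (classic (exists u', (u', w) \in M /\ ~~ pW w u u')) => // hno.
exfalso; apply: (hs u w hw); split; first by [].
split; first by [].
move=> u' hu'; case: (boolP (pW w u u')) => // hb.
by exfalso; apply: hno; exists u'.
Qed.
Lemma nbU (W' : {set W}) (M : {set U * W}) : stable_in pU pW W' M ->
  forall u w, w \in W' -> (u, w) \notin M -> (forall u', (u', w) \in M -> pW w u u') ->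
  exists w', (u, w') \in M /\ ~~ pU u w w'.
Proof.
move=> [_ hs] u w hw hn hw'.
case: (classic (exists w', (u, w') \in M /\ ~~ pU u w w')) => // hno.
exfalso; apply: (hs u w hw); split; first by [].
split; last by [].
move=> w' hu'; case: (boolP (pU u w w')) => // hb.
by exfalso; apply: hno; exists w'.
Qed.

Lemma m2exU u : exists w, (u, w) \in M2.
Proof.
case: (classic (exists w, (u, w) \in M2)) => // hno; exfalso.
have inj1 : {in M2 &, injective (@fst U W)}.
  by move=> p q hp hq e; apply: M2mat => //; left.
have inj2 : {in M2 &, injective (@snd U W)}.
  by move=> p q hp hq e; apply: M2mat => //; right.
have h1 : #|(@fst U W) @: M2| < #|U|.
  rewrite -cardsT; apply: proper_card; rewrite properT; apply/negP => /eqP e.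
  have : u \in [set: U] by rewrite inE.
  rewrite -e => /imsetP [p hp ep]; apply: hno; exists p.2.
  by rewrite ep -surjective_pairing.
rewrite (card_in_imset inj1) -(card_in_imset inj2) -hcard in h1.
have hsub : ~~ ([set: W] \subset (@snd U W) @: M2).
  apply/negP => hs; have e : (@snd U W) @: M2 = [set: W].
    by apply/eqP; rewrite eqEsubset subsetT.
  by move: h1; rewrite e cardsT ltnn.
case/subsetPn: hsub => w _ hw.
have hn : (u, w) \notin M2 by apply/negP => h; apply: hno; exists w.
have hv : forall w', (u, w') \in M2 -> pU u w w' by move=> w' h; exfalso; apply: hno; exists w'.
have [u' [hu' _]] := nbW hM2 (in_setT w) hn hv.
by move/negP: hw; apply; apply/imsetP; exists (u', w).
Qed.

Lemma m2exW w : exists u, (u, w) \in M2.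
Proof.
have inj1 : {in M2 &, injective (@fst U W)}.
  by move=> p q hp hq e; apply: M2mat => //; left.
have inj2 : {in M2 &, injective (@snd U W)}.
  by move=> p q hp hq e; apply: M2mat => //; right.
have e1 : (@fst U W) @: M2 = [set: U].
  apply/eqP; rewrite eqEsubset subsetT /=; apply/subsetP => u _.
  have [w0 hw] := m2exU u; apply/imsetP; exists (u, w0) => //.
have e2 : (@snd U W) @: M2 = [set: W].
  apply/eqP; rewrite eqEcard subsetT /= cardsT hcard -cardsT -e1.
  by rewrite (card_in_imset inj1) (card_in_imset inj2).
have : w \in (@snd U W) @: M2 by rewrite e2 inE.
case/imsetP => p hp ->; exists p.1; by rewrite -surjective_pairing.
Qed.

Definition Sb u := [exists w1, exists w2, [&& (u, w1) \in M1, (u, w2) \in M2 & pU u w1 w2]].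

Lemma SbP u : reflect (exists w1 w2, [/\ (u, w1) \in M1, (u, w2) \in M2 & pU u w1 w2]) (Sb u).
Proof.
apply: (iffP existsP) => [[w1 /existsP [w2 /and3P [a b c]]]|[w1 [w2 [a b c]]]].
  by exists w1, w2.
by exists w1; apply/existsP; exists w2; apply/and3P.
Qed.

Lemma fwd x y w1 : Sb x -> (x, w1) \in M1 -> (y, w1) \in M2 -> Sb y /\ pW w1 y x.
Proof.
case/SbP => a [w2 [ha hw2 hp]] h1 hy.
have ea := m1U ha h1; subst a.
have hn : (x, w1) \notin M2.
  by apply/negP => h; have e := m2U h hw2; subst w2; rewrite irrU in hp.
have hv : forall w', (x, w') \in M2 -> pU x w1 w' by move=> w' h; rewrite -(m2U hw2 h).
have [u' [hu' hb]] := nbW hM2 (in_setT w1) hn hv.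
have eu := m2W hu' hy; subst u'.
have nyx : y != x by apply/eqP => e; subst y; rewrite hy in hn.
have pyx : pW w1 y x by apply: totW hb; rewrite eq_sym.
split => //.
have hn1 : (y, w1) \notin M1 by apply/negP => h; rewrite (m1W h h1) eqxx in nyx.
have hv1 : forall u', (u', w1) \in M1 -> pW w1 y u' by move=> u' h; rewrite -(m1W h1 h).
have [w' [hw' hb']] := nbU hM1 (m1W1 h1) hn1 hv1.
apply/SbP; exists w', w1; split => //.
apply: totU hb'; apply/eqP => e; subst w'; by rewrite hw' in hn1.
Qed.

Lemma surj u w2 : Sb u -> (u, w2) \in M2 -> exists x, Sb x /\ (x, w2) \in M1.
Proof.
move=> Su hu.
pose SS := [set x | Sb x].
pose Q1 := [set p in M1 | p.1 \in SS].
pose A := (@snd U W) @: Q1.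
pose P2 := [set p in M2 | p.2 \in A].
have injQ1 : {in Q1 &, injective (@snd U W)}.
  by move=> p q; rewrite !inE => /andP [hp _] /andP [hq _] e; apply: M1mat => //; right.
have injQ1' : {in Q1 &, injective (@fst U W)}.
  by move=> p q; rewrite !inE => /andP [hp _] /andP [hq _] e; apply: M1mat => //; left.
have injP2 : {in P2 &, injective (@snd U W)}.
  by move=> p q; rewrite !inE => /andP [hp _] /andP [hq _] e; apply: M2mat => //; right.
have injP2' : {in P2 &, injective (@fst U W)}.
  by move=> p q; rewrite !inE => /andP [hp _] /andP [hq _] e; apply: M2mat => //; left.
have eQ1 : (@fst U W) @: Q1 = SS.
  apply/setP => x; apply/imsetP/idP.
    by case=> p; rewrite !inE => /andP [_ h] ->.
  rewrite inE => hx; case/SbP: (hx) => w1 [w3 [h1 _ _]].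
  by exists (x, w1); rewrite // !inE h1 /=.
have eP2 : (@snd U W) @: P2 = A.
  apply/setP => w; apply/imsetP/idP.
    by case=> p; rewrite !inE => /andP [_ h] ->.
  move=> hw; have [y hy] := m2exW w.
  by exists (y, w); rewrite // !inE hy /=.
have sub : (@fst U W) @: P2 \subset SS.
  apply/subsetP => y /imsetP [p]; rewrite !inE => /andP [hp].
  case/imsetP => q; rewrite !inE => /andP [hq hq1] e ->.
  have hq' : (q.1, p.2) \in M1 by rewrite e -surjective_pairing.
  have hp' : (p.1, p.2) \in M2 by rewrite -surjective_pairing.
  exact: (fwd hq1 hq' hp').1.
have eq2 : (@fst U W) @: P2 = SS.
  apply/eqP; rewrite eqEcard sub /=.
  rewrite (card_in_imset injP2') -(card_in_imset injP2) eP2 (card_in_imset injQ1).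
  by rewrite -(card_in_imset injQ1') eQ1.
have : u \in (@fst U W) @: P2 by rewrite eq2 inE.
case/imsetP => p; rewrite !inE => /andP [hp hpA] ep.
have hp' : (u, p.2) \in M2 by rewrite ep -surjective_pairing.
have e2 := m2U hp' hu; rewrite e2 in hpA.
case/imsetP: hpA => q; rewrite !inE => /andP [hq hq1] eq.
exists q.1; split => //; by rewrite eq -surjective_pairing.
Qed.

Notation D := (dadj M1 M2).

Lemma dE u w : D (inl u) (inr w) =
  (((u, w) \in M1) && ((u, w) \notin M2)) || (((u, w) \in M2) && ((u, w) \notin M1)).
Proof. by rewrite /= !inE; case: ((u, w) \in M1); case: ((u, w) \in M2). Qed.
Lemma dE' u w : D (inr w) (inl u) = D (inl u) (inr w).
Proof. by []. Qed.

Lemma dsym : symmetric D.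
Proof. by case=> [u|w] [u'|w']. Qed.

Lemma connS x y : connect D x y = connect D y x.
Proof. exact: (sym_connect_sym dsym). Qed.

Lemma connE v v' : connect D v v' -> connect D v =1 connect D v'.
Proof.
move=> h x; apply/idP/idP => hx.
  by apply: connect_trans hx; rewrite connS.
exact: connect_trans h hx.
Qed.

Definition Cset (x : U + W) : bool :=
  match x with inl u => Sb u | inr w => [exists y, Sb y && ((y, w) \in M1)] end.

Lemma Cclosed x y : Cset x -> D x y -> Cset y.
Proof.
case: x => [u|w]; case: y => [u'|w'].
- by [].
- move=> Su; have {}Su : Sb u := Su; rewrite dE => /orP [/andP [h _]|/andP [h _]].
    by apply/existsP; exists u; rewrite Su h.
  have [x [Sx hx]] := surj Su h.
  by apply/existsP; exists x; rewrite Sx hx.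
- move=> Cw; have {}Cw : [exists y, Sb y && ((y, w) \in M1)] := Cw.
  case/existsP: Cw => x /andP [Sx hx]; rewrite dE' dE => /orP [/andP [h _]|/andP [h _]].
    by rewrite (m1W h hx).
  exact: (fwd Sx hx h).1.
- by [].
Qed.

Lemma Cconn x y : Cset x -> connect D x y -> Cset y.
Proof.
move=> Cx /connectP [p hp ->]; elim: p x Cx hp => [|z p IH] x Cx //=.
case/andP => hxz hp; apply: IH hp; exact: Cclosed Cx hxz.
Qed.

Lemma deg2 x : Cset x -> ddeg M1 M2 x = 2.
Proof.
rewrite /ddeg; case: x => [u|w] Cx.
- have {}Cx : Sb u := Cx; case/SbP: Cx => w1 [w2 [h1 h2 hp]].
  have n12 : w1 != w2 by apply/eqP => e; subst w2; rewrite irrU in hp.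
  rewrite (@eq_card _ _ [set inr w1; inr w2]) ?cards2.
    by rewrite (inj_eq (@inr_inj _ _)) n12.
  case=> [u'|w]; rewrite !inE; first by [].
  rewrite -[_ \in _]/(D (inl u) (inr w)) dE.
  apply/idP/idP.
    case/orP => /andP [h _]; [by rewrite (m1U h1 h) eqxx | by rewrite (m2U h2 h) eqxx orbT].
  case/orP => /eqP [->].
    have hn : (u, w1) \notin M2 by apply/negP => h; rewrite (m2U h2 h) eqxx in n12.
    by rewrite h1 hn.
  have hn : (u, w2) \notin M1 by apply/negP => h; rewrite (m1U h1 h) eqxx in n12.
  by rewrite h2 hn orbT.
- have {}Cx : [exists y, Sb y && ((y, w) \in M1)] := Cx.
  case/existsP: Cx => x /andP [Sx hx].
  have [y hy] := m2exW w.
  have [Sy _] := fwd Sx hx hy.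
  have nxy : x != y.
    apply/eqP => e; subst y; case/SbP: Sx => w1 [w2 [h1 h2 hp]].
    have e1 := m1U h1 hx; have e2 := m2U h2 hy; subst w1 w2; by rewrite irrU in hp.
  rewrite (@eq_card _ _ [set inl x; inl y]) ?cards2.
    by rewrite (inj_eq (@inl_inj _ _)) nxy.
  case=> [u'|w']; rewrite !inE; last by [].
  rewrite -[_ \in _]/(D (inr w) (inl u')) dE' dE.
  apply/idP/idP.
    case/orP => /andP [h _]; [by rewrite (m1W h hx) eqxx | by rewrite (m2W h hy) eqxx orbT].
  case/orP => /eqP [->].
    have hn : (x, w) \notin M2 by apply/negP => h; rewrite (m2W h hy) eqxx in nxy.
    by rewrite hx hn.
  have hn : (y, w) \notin M1 by apply/negP => h; rewrite (m1W h hx) eqxx in nxy.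
  by rewrite hy hn orbT.
Qed.

Lemma cycS u : Sb u -> comp_cycle M1 M2 (inl u).
Proof.
move=> Su; apply/forallP => x; apply/implyP => c; apply/eqP; apply: deg2.
exact: Cconn (_ : Cset (inl u)) c.
Qed.

Lemma typeII_S u v : Sb u -> connect D v (inl u) -> typeII pU pW M1 M2 v.
Proof.
move=> Su cv.
have C x : connect D v x -> Cset x.
  move=> cx; apply: (Cconn (_ : Cset (inl u))) => //.
  by rewrite connS in cv; exact: connect_trans cv cx.
apply/andP; split.
- apply/forallP => y; apply/implyP => /C Sy; have {}Sy : Sb y := Sy.
  apply/forallP => a; apply/forallP => b; apply/implyP => /andP [ha hb].
  case/SbP: Sy => a' [b' [ha' hb' hp]].
  by rewrite (m1U ha ha') (m2U hb hb').
- apply/forallP => w; apply/implyP => /C Cw.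
  have {}Cw : [exists y, Sb y && ((y, w) \in M1)] := Cw.
  case/existsP: Cw => x /andP [Sx hx].
  apply/forallP => a; apply/forallP => b; apply/implyP => /andP [ha hb].
  rewrite (m1W ha hx); exact: (fwd Sx hx hb).2.
Qed.

Lemma deg0U u w : (u, w) \in M1 -> (u, w) \in M2 -> ddeg M1 M2 (inl u) = 0.
Proof.
move=> h1 h2; apply: eq_card0; case=> [u'|w'] //.
rewrite !inE -[_ \in _]/(D (inl u) (inr w')) dE.
apply/negP => /orP [/andP [h hn]|/andP [h hn]].
  by rewrite -(m1U h1 h) h2 in hn.
by rewrite -(m2U h2 h) h1 in hn.
Qed.

Lemma deg0W u w : (u, w) \in M1 -> (u, w) \in M2 -> ddeg M1 M2 (inr w) = 0.
Proof.
move=> h1 h2; apply: eq_card0; case=> [u'|w'] //.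
rewrite !inE -[_ \in _]/(D (inr w) (inl u')) dE' dE.
apply/negP => /orP [/andP [h hn]|/andP [h hn]].
  by rewrite -(m1W h1 h) h2 in hn.
by rewrite -(m2W h2 h) h1 in hn.
Qed.

Lemma typeI_noS v : comp_cycle M1 M2 v -> (forall x, connect D v (inl x) -> ~~ Sb x) ->
  typeI pU pW M1 M2 v.
Proof.
move=> cyc noS.
have dg x : connect D v x -> ddeg M1 M2 x = 2.
  by move=> c; move/forallP: cyc => /(_ x) /implyP /(_ c) /eqP.
apply/andP; split.
- apply/forallP => u; apply/implyP => cu.
  apply/forallP => a; apply/forallP => b; apply/implyP => /andP [ha hb].
  have nab : a != b.
    apply/eqP => e; subst b; by have := dg _ cu; rewrite (deg0U ha hb).
  apply: totU nab _; apply/negP => hp; move/negP: (noS u cu); apply.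
  by apply/SbP; exists a, b.
- apply/forallP => w; apply/implyP => cw.
  apply/forallP => u1; apply/forallP => u2; apply/implyP => /andP [h1 h2].
  have n12 : u1 != u2.
    apply/eqP => e; subst u2; by have := dg _ cw; rewrite (deg0W h1 h2).
  have hn : (u2, w) \notin M1 by apply/negP => h; rewrite (m1W h1 h) eqxx in n12.
  have cu2 : connect D v (inl u2).
    apply: connect_trans cw (connect1 _).
    by rewrite dE' dE h2 hn orbT.
  case: (classic (forall u', (u', w) \in M1 -> pW w u2 u')) => hc.
    have [w' [hw' hb]] := nbU hM1 (m1W1 h1) hn hc.
    exfalso; move/negP: (noS u2 cu2); apply; apply/SbP; exists w', w; split => //.
    apply: totU hb; apply/eqP => e; subst w'; by rewrite hw' in hn.
  have [u' hu'] : exists u', ~ ((u', w) \in M1 -> pW w u2 u').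
    by apply: not_all_ex_not.
  have h' : (u', w) \in M1 by case: (boolP ((u', w) \in M1)) => // h; exfalso; apply: hu'; rewrite (negbTE h).
  have {}hu' : ~~ pW w u2 u' by apply/negP => hp; apply: hu' => _.
  rewrite -(m1W h1 h') in hu'.
  apply: totW hu'; by rewrite eq_sym.
Qed.

Lemma dich v : comp_cycle M1 M2 v -> typeI pU pW M1 M2 v || typeII pU pW M1 M2 v.
Proof.
move=> cyc.
case: (classic (exists x, connect D v (inl x) /\ Sb x)) => [[x [cx Sx]]|h].
  by rewrite (typeII_S Sx cx) orbT.
rewrite typeI_noS //; move=> x cx; apply/negP => Sx; apply: h; by exists x.
Qed.

Lemma transfer v v' : connect D v v' ->
  [/\ comp_cycle M1 M2 v = comp_cycle M1 M2 v',
      typeI pU pW M1 M2 v = typeI pU pW M1 M2 v' &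
      typeII pU pW M1 M2 v = typeII pU pW M1 M2 v'].
Proof.
move=> c; have e : connect D v = connect D v'.
  by apply: FunctionalExtensionality.functional_extensionality; exact: connE.
by rewrite /comp_cycle /typeI /typeII e.
Qed.

Lemma tIU v u a b : typeI pU pW M1 M2 v -> connect D v (inl u) ->
  (u, a) \in M1 -> (u, b) \in M2 -> pU u b a.
Proof.
case/andP => /forallP /(_ u) /implyP h _ c ha hb.
by move: (h c) => /forallP /(_ a) /forallP /(_ b) /implyP; apply; rewrite ha hb.
Qed.
Lemma tIIU v u a b : typeII pU pW M1 M2 v -> connect D v (inl u) ->
  (u, a) \in M1 -> (u, b) \in M2 -> pU u a b.
Proof.
case/andP => /forallP /(_ u) /implyP h _ c ha hb.
by move: (h c) => /forallP /(_ a) /forallP /(_ b) /implyP; apply; rewrite ha hb.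
Qed.
Lemma tIW v w a b : typeI pU pW M1 M2 v -> connect D v (inr w) ->
  (a, w) \in M1 -> (b, w) \in M2 -> pW w a b.
Proof.
case/andP => _ /forallP /(_ w) /implyP h c ha hb.
by move: (h c) => /forallP /(_ a) /forallP /(_ b) /implyP; apply; rewrite ha hb.
Qed.
Lemma tIIW v w a b : typeII pU pW M1 M2 v -> connect D v (inr w) ->
  (a, w) \in M1 -> (b, w) \in M2 -> pW w b a.
Proof.
case/andP => _ /forallP /(_ w) /implyP h c ha hb.
by move: (h c) => /forallP /(_ a) /forallP /(_ b) /implyP; apply; rewrite ha hb.
Qed.

Lemma cyc_deg v x : comp_cycle M1 M2 v -> connect D v x -> ddeg M1 M2 x = 2.
Proof. by move=> cyc c; move/forallP: cyc => /(_ x) /implyP /(_ c) /eqP. Qed.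

Lemma nbrU u w2 : ddeg M1 M2 (inl u) = 2 -> (u, w2) \in M2 ->
  exists w1, (u, w1) \in M1 /\ (u, w1) \notin M2.
Proof.
move=> dg h2.
case: (classic (exists w1, (u, w1) \in M1 /\ (u, w1) \notin M2)) => // hno.
exfalso.
have : #|D (inl u)| <= #|pred1 (inr w2 : U + W)|.
  apply: subset_leq_card; apply/subsetP; case=> [u'|w] //.
  rewrite -[_ \in D _]/(D (inl u) (inr w)) dE => /orP [/andP [a b]|/andP [a _]].
    by exfalso; apply: hno; exists w.
  by rewrite inE (m2U h2 a).
by rewrite card1; rewrite /ddeg in dg; rewrite dg.
Qed.

Lemma nbrW u2 w : ddeg M1 M2 (inr w) = 2 -> (u2, w) \in M2 ->
  exists u1, (u1, w) \in M1 /\ (u1, w) \notin M2.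
Proof.
move=> dg h2.
case: (classic (exists u1, (u1, w) \in M1 /\ (u1, w) \notin M2)) => // hno.
exfalso.
have : #|D (inr w)| <= #|pred1 (inl u2 : U + W)|.
  apply: subset_leq_card; apply/subsetP; case=> [u|w'] //.
  rewrite -[_ \in D _]/(D (inr w) (inl u)) dE' dE => /orP [/andP [a b]|/andP [a _]].
    by exfalso; apply: hno; exists u.
  by rewrite inE (m2W h2 a).
by rewrite card1; rewrite /ddeg in dg; rewrite dg.
Qed.

Notation Mp := (M2prime pU pW M1 M2).
Notation cyc u := (comp_cycle M1 M2 (inl u)).
Notation tI u := (typeI pU pW M1 M2 (inl u)).
Notation tII u := (typeII pU pW M1 M2 (inl u)).

Lemma MpE u w : ((u, w) \in Mp) =
  [|| ((u, w) \in M1) && ((u, w) \in M2),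
      [&& (u, w) \in M2, (u, w) \notin M1 & ~~ cyc u || tI u] |
      [&& (u, w) \in M1, (u, w) \notin M2, cyc u & tII u]].
Proof.
rewrite /M2prime inE /= !inE.
by case: ((u, w) \in M1); case: ((u, w) \in M2); rewrite /= ?andbT ?andbF.
Qed.

Lemma dUW u w : (u, w) \in M1 -> (u, w) \notin M2 -> D (inl u) (inr w).
Proof. by move=> a b; rewrite dE a b. Qed.
Lemma dUW2 u w : (u, w) \in M2 -> (u, w) \notin M1 -> D (inl u) (inr w).
Proof. by move=> a b; rewrite dE a b orbT. Qed.

Lemma mixed u w u' w' :
  (u, w) \in M2 -> (u, w) \notin M1 -> ~~ cyc u || tI u ->
  (u', w') \in M1 -> (u', w') \notin M2 -> cyc u' -> tII u' ->
  u = u' \/ w = w' -> False.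
Proof.
move=> a b c d e f g [eu|ew].
- subst u'; rewrite f /= in c.
  exact: asymU (tIU c (connect0 _ _) d a) (tIIU g (connect0 _ _) d a).
- subst w'.
  have c1 : connect D (inl u) (inr w) by apply: connect1; exact: dUW2.
  have c2 : connect D (inl u) (inl u').
    apply: connect_trans c1 (connect1 _); rewrite dE'; exact: dUW.
  case: (transfer c2) => e1 _ e3.
  rewrite e1 f /= in c; rewrite -e3 in g.
  exact: asymW (tIW c c1 d a) (tIIW g c1 d a).
Qed.

Lemma Mp_mat : is_matching Mp.
Proof.
move=> [u w] [u' w'] hp hq hor.
move: hp hq; rewrite !MpE.
case/or3P => [/andP [p1 p2]|/and3P [p2 p1 pc]|/and4P [p1 p2 pc pt]];
case/or3P => [/andP [q1 q2]|/and3P [q2 q1 qc]|/and4P [q1 q2 qc qt]];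
try (by apply: M2mat); try (by apply: M1mat).
- by exfalso; apply: (mixed p2 p1 pc q1 q2 qc qt hor).
- by exfalso; apply: (mixed q2 q1 qc p1 p2 pc pt); case: hor => /= e; [left|right]; rewrite e.
Qed.

Lemma MpU u : exists w, (u, w) \in Mp.
Proof.
have [w2 h2] := m2exU u.
case: (boolP ((u, w2) \in M1)) => h1.
  by exists w2; rewrite MpE h1 h2.
case: (boolP (~~ cyc u || tI u)) => hc.
  by exists w2; rewrite MpE h2 h1 hc orbT.
move: hc; rewrite negb_or negbK => /andP [cy ntI].
have t2 : tII u by move: (dich cy); rewrite (negbTE ntI).
have [w1 [a b]] := nbrU (cyc_deg cy (connect0 _ _)) h2.
by exists w1; rewrite MpE a b cy t2 !orbT.
Qed.

Lemma MpW w : exists u, (u, w) \in Mp.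
Proof.
have [u h2] := m2exW w.
case: (boolP ((u, w) \in M1)) => h1.
  by exists u; rewrite MpE h1 h2.
case: (boolP (~~ cyc u || tI u)) => hc.
  by exists u; rewrite MpE h2 h1 hc orbT.
move: hc; rewrite negb_or negbK => /andP [cy ntI].
have t2 : tII u by move: (dich cy); rewrite (negbTE ntI).
have c1 : connect D (inl u) (inr w) by apply: connect1; exact: dUW2.
have [u1 [a b]] := nbrW (cyc_deg cy c1) h2.
have c2 : connect D (inl u) (inl u1).
  apply: connect_trans c1 (connect1 _); rewrite dE'; exact: dUW.
case: (transfer c2) => e1 _ e3.
by exists u1; rewrite MpE a b -e1 -e3 cy t2 !orbT.
Qed.

Lemma Mp_stable u w : ~ blocking pU pW Mp u w.
Proof.
move=> [hn [hU hW]].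
have [w' hw'] := MpU u; have [u' hu'] := MpW w.
have pw := hU w' hw'; have pu := hW u' hu'.
have [w2 h2] := m2exU u.
have claim : w' = w2 \/ pU u w' w2.
  move: hw'; rewrite MpE => /or3P [/andP [_ a]|/and3P [a _ _]|/and4P [a _ _ t]].
  - by left; exact: m2U a h2.
  - by left; exact: m2U a h2.
  - by right; exact: tIIU t (connect0 _ _) a h2.
have pw2 : pU u w w2 by case: claim => [<-|h] //; exact: transU pw h.
have hn2 : (u, w) \notin M2.
  by apply/negP => h; rewrite (m2U h h2) irrU in pw2.
have hv : forall w'', (u, w'') \in M2 -> pU u w w'' by move=> w'' h; rewrite -(m2U h2 h).
have [m [hm hb]] := nbW hM2 (in_setT w) hn2 hv.
have num : u != m by apply/eqP => e; subst m; rewrite hm in hn2.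
have pmu : pW w m u := totW num hb.
have [h1' h1n] : (u', w) \in M1 /\ (u', w) \notin M2.
  move: hu'; rewrite MpE => /or3P [/andP [_ a]|/and3P [a _ _]|/and4P [a b _ _]] //.
  - by exfalso; rewrite (m2W a hm) in pu; exact: asymW pu pmu.
  - by exfalso; rewrite (m2W a hm) in pu; exact: asymW pu pmu.
have hn1 : (u, w) \notin M1.
  by apply/negP => h; rewrite (m1W h h1') irrW in pu.
have hv1 : forall u'', (u'', w) \in M1 -> pW w u u'' by move=> u'' h; rewrite -(m1W h1' h).
have [w1 [hw1 hb1]] := nbU hM1 (m1W1 h1') hn1 hv1.
have nw : w != w1 by apply/eqP => e; subst w1; rewrite hw1 in hn1.
have p1 : pU u w1 w := totU nw hb1.
have Su : Sb u by apply/SbP; exists w1, w2; split => //; exact: transU p1 pw2.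
have cy := cycS Su; have t2 := typeII_S Su (connect0 _ _).
move: hw'; rewrite MpE => /or3P [/andP [a b]|/and3P [a _ c]|/and4P [a _ _ _]].
- rewrite -(m1U hw1 a) in b; have e := m2U b h2; subst w2.
  by move: (transU p1 pw2); rewrite irrU.
- rewrite cy /= in c.
  exact: asymU (tIU c (connect0 _ _) hw1 h2) (transU p1 pw2).
- rewrite -(m1U hw1 a) in pw; exact: asymU pw p1.
Qed.

Lemma main : perfect_matching Mp /\ stable_in pU pW [set: W] Mp.
Proof.
split; first by split; [exact: Mp_mat | split; [exact: MpU | exact: MpW]].
split; first by split; [exact: Mp_mat | move=> p _; rewrite inE].
move=> u w _; exact: Mp_stable.
Qed.
End Proof.

Theorem lemma4 (U W : finType) (W1 : {set W})
  (pU : U -> rel W) (pW : W -> rel U)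
  (hpU : forall u, strict_total_order (pU u))
  (hpW : forall w, strict_total_order (pW w))
  (hcard1 : #|W1| <= #|W|) (hcard : #|W| = #|U|)
  (M1 M2 : {set U * W})
  (hM1 : stable_in pU pW W1 M1)
  (hM2 : stable_in pU pW [set: W] M2) :
  perfect_matching (M2prime pU pW M1 M2) /\
  stable_in pU pW [set: W] (M2prime pU pW M1 M2).

Proof. exact (main hpU hpW hcard hM1 hM2). Qed.
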